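(* Let $c\in\mathcal{C}$ be in addition piecewise twice differentiable with bounded second derivative. For each $n$, let $0=\theta_{n,0}<\theta_{n,1}<\dots<\theta_{n,k_n}=2\pi$ and let $c_n$ be the polygonal curve with vertices $c(\theta_{n,0}),c(\theta_{n,1}),\dots,c(\theta_{n,k_n})$, parametrized as the piecewise linear interpolation of $c$ at the parameters $\theta_{n,i}$. If $\max_i(\theta_{n,i+1}-\theta_{n,i})\to 0$ as $n\to\infty$, then $\mu_{c_n}$ converges weakly to $\mu_c$.
   Context: The plane is identified with $\mathbb{C}$, and $\mathbb{S}^1$ with $[0,2\pi)$ (or the unit circle in $\mathbb{C}$). $\mathcal{C}$ denotes the set of Lipschitz maps $c:\mathbb{S}^1\to\mathbb{C}$ with $c'(\theta)\neq 0$ for a.e. $\theta$. For $c\in\mathcal{C}$, the Gauss map is $T_c(\theta)=c'(\theta)/|c'(\theta)|$, and the length measure of $c$ is the positive Radon measure $\mu_c$ on $\mathbb{S}^1$ defined by $\mu_c(B)=\int_{T_c^{-1}(B)}|c'(\theta)|d\theta$ for Borel $B$. Weak convergence of measures on $\mathbb{S}^1$ means convergence of integrals against every continuous function on $\mathbb{S}^1$. *)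

(* Defs.v *)
From HB Require Import structures.
From mathcomp Require Import all_boot all_order all_algebra.
From mathcomp Require Import all_classical all_reals all_analysis.
Set Implicit Arguments. Unset Strict Implicit. Unset Printing Implicit Defensive.
Import Order.TTheory GRing.Theory Num.Theory.
Import numFieldNormedType.Exports.
Local Open Scope classical_set_scope.
Local Open Scope ring_scope.

(* The plane C is identified with R * R (real and imaginary parts).
   A closed curve c : S^1 -> C is represented as a 2*pi-periodic map R -> R * R,
   S^1 being identified with [0, 2*pi). *)

Section Defs.
Variable R : realType.

Definition eucl (p : R * R) : R := Num.sqrt (p.1 ^+ 2 + p.2 ^+ 2).
Definition pdist (p q : R * R) : R := eucl (p.1 - q.1, p.2 - q.2).

Definition unit_circle : set (R * R) := [set p | eucl p = 1].

Definition curve_derivable (c : R -> R * R) (t : R) : Prop :=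
  derivable (fun s => (c s).1) t 1 /\ derivable (fun s => (c s).2) t 1.
Definition dcurve (c : R -> R * R) (t : R) : R * R :=
  (derive1 (fun s => (c s).1) t, derive1 (fun s => (c s).2) t).

Definition gauss (c : R -> R * R) (t : R) : R * R :=
  ((dcurve c t).1 / eucl (dcurve c t), (dcurve c t).2 / eucl (dcurve c t)).

Definition in_C (c : R -> R * R) : Prop :=
  (forall t, c (t + 2 * pi) = c t) /\
  (exists L : R, forall s t, pdist (c s) (c t) <= L * `|s - t|) /\
  {ae (@lebesgue_measure R), forall t, `[0%R, (2 * pi)%R]%classic t ->
       curve_derivable c t /\ dcurve c t != (0, 0)}.

Definition length_measure (c : R -> R * R) (B : set (R * R)) : \bar R :=
  (\int[@lebesgue_measure R]_(t in `[0%R, (2 * pi)%R]%classic `&` gauss c @^-1` B)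
     (eucl (dcurve c t))%:E)%E.

(* Integral of f against mu_c, written via the image-measure formula
   \int f d mu_c = \int_0^{2 pi} f (T_c t) |c'(t)| dt. *)
Definition length_integral (c : R -> R * R) (f : R * R -> R) : \bar R :=
  (\int[@lebesgue_measure R]_(t in `[0%R, (2 * pi)%R]%classic)
     (f (gauss c t) * eucl (dcurve c t))%:E)%E.

Definition length_weak_cvg (cn : nat -> R -> R * R) (c : R -> R * R) : Prop :=
  forall f : R * R -> R, {within unit_circle, continuous f} ->
    (fun n => length_integral (cn n) f) @ \oo --> length_integral c f.

Definition piecewise_C2_bounded (c : R -> R * R) : Prop :=
  exists (m : nat) (a : nat -> R) (M : R),
    a 0%N = 0 /\ a m = 2 * pi /\ (forall j, (j < m)%N -> a j < a j.+1) /\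
    forall j, (j < m)%N -> forall t, a j < t < a j.+1 ->
      curve_derivable c t /\ curve_derivable (dcurve c) t /\
      eucl (dcurve (dcurve c) t) <= M.

Definition mod2pi (t : R) : R := t - 2 * pi * (Num.floor (t / (2 * pi)))%:~R.

Definition interp1 (g : R -> R) (k : nat) (th : nat -> R) (t : R) : R :=
  \sum_(i < k) (if (th i <= t < th i.+1)
                then g (th i) + (t - th i) / (th i.+1 - th i) * (g (th i.+1) - g (th i))
                else 0).

Definition polygon (c : R -> R * R) (k : nat) (th : nat -> R) (t : R) : R * R :=
  (interp1 (fun s => (c s).1) k th (mod2pi t), interp1 (fun s => (c s).2) k th (mod2pi t)).

Definition mesh (k : nat) (th : nat -> R) : R :=
  \big[Num.max/0]_(i < k) (th i.+1 - th i).

End Defs.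

(* Main.v *)
Require Import Defs.
From HB Require Import structures.
From mathcomp Require Import all_boot all_order all_algebra.
From mathcomp Require Import all_classical all_reals all_analysis.
From mathcomp Require Import ring lra measurable_realfun.
Import Order.TTheory GRing.Theory Num.Theory.
Import numFieldNormedType.Exports.
Local Open Scope classical_set_scope.
Local Open Scope ring_scope.
Section S1.
Variable R : realType.
Implicit Types v w : R * R.

Lemma eucl_ge0 v : 0 <= eucl v.
Proof. exact: sqrtr_ge0. Qed.

Lemma eucl_eq0 v : eucl v = 0 -> v = (0, 0).
Proof.
move=> /eqP; rewrite /eucl sqrtr_eq0 => h.
have h1 : v.1 ^+ 2 = 0 by apply/eqP; rewrite eq_le sqr_ge0 andbT; 
  apply: le_trans h; rewrite lerDl sqr_ge0.
have h2 : v.2 ^+ 2 = 0 by apply/eqP; rewrite eq_le sqr_ge0 andbT;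
  apply: le_trans h; rewrite lerDr sqr_ge0.
move: h1 h2 => /eqP; rewrite sqrf_eq0 => /eqP h1 /eqP; rewrite sqrf_eq0 => /eqP h2.
by move: h1 h2; case: v {h} => a b /= -> ->.
Qed.

Lemma abs1_le_eucl v : `|v.1| <= eucl v.
Proof.
rewrite /eucl -sqrtr_sqr ler_sqrt ?addr_ge0 ?sqr_ge0 //.
by rewrite lerDl sqr_ge0.
Qed.

Lemma abs2_le_eucl v : `|v.2| <= eucl v.
Proof.
rewrite /eucl -sqrtr_sqr ler_sqrt ?addr_ge0 ?sqr_ge0 //.
by rewrite lerDr sqr_ge0.
Qed.

Lemma eucl_scale v d : 0 < d -> eucl (v.1 / d, v.2 / d) = eucl v / d.
Proof.
move=> d0; rewrite /eucl /= !expr_div_n -mulrDl sqrtrM ?addr_ge0 ?sqr_ge0 //.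
by rewrite sqrtrV ?sqr_ge0 // sqrtr_sqr gtr0_norm.
Qed.

Definition nrm v : R * R := (v.1 / eucl v, v.2 / eucl v).
Definition Gf (f : R * R -> R) v : R := f (nrm v) * eucl v.

Lemma eucl_nrm v : v != (0, 0) -> eucl (nrm v) = 1.
Proof.
move=> v0; have e0 : 0 < eucl v.
  rewrite lt_def eucl_ge0 andbT; apply/eqP => /eucl_eq0 h; by rewrite h eqxx in v0.
by rewrite /nrm eucl_scale // divff // gt_eqF.
Qed.

Lemma Gf_bound f B v : (forall p, unit_circle p -> `|f p| <= B) -> 0 <= B ->
  `|Gf f v| <= B * eucl v.
Proof.
move=> hB B0; rewrite /Gf normrM (ger0_norm (eucl_ge0 v)).
have [->|v0] := eqVneq v (0, 0).
  by rewrite /eucl /= expr0n /= addr0 sqrtr0 !mulr0.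
by rewrite ler_wpM2r ?eucl_ge0 // hB // /unit_circle /= eucl_nrm.
Qed.

Lemma eucl_cont : continuous (@eucl R).
Proof.
move=> v; rewrite /eucl.
apply: continuous_comp; last exact: sqrt_continuous.
apply: cvgD; apply: cvgM; [exact: cvg_fst|exact: cvg_fst|exact: cvg_snd|exact: cvg_snd].
Qed.

Lemma nrm_cont v : v != (0, 0) -> nrm w @[w --> v] --> nrm v.
Proof.
move=> v0; have e0 : eucl v != 0.
  by apply/eqP => /eucl_eq0 h; rewrite h eqxx in v0.
rewrite /nrm; apply: (@cvg_pair _ _ _ _ (nbhs (v.1 / eucl v)) (nbhs (v.2 / eucl v))).
  apply: cvgM; first exact: cvg_fst.
  exact: (cvgV e0 (eucl_cont v)).
apply: cvgM; first exact: cvg_snd.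
exact: (cvgV e0 (eucl_cont v)).
Qed.

Lemma Gf_cont (f : R * R -> R) (B : R) : {within @unit_circle R, continuous f} ->
  (forall p, unit_circle p -> `|f p| <= B) -> 0 <= B -> continuous (Gf f).
Proof.
move=> fc hB B0 v; rewrite /continuous_at.
have [->|v0] := eqVneq v (0, 0).
  have -> : Gf f (0, 0) = 0 by rewrite /Gf /eucl /= expr0n /= addr0 sqrtr0 mulr0.
  apply/cvgrPdist_lt => e e0.
  have := eucl_cont (0, 0); rewrite /continuous_at {2}/eucl /= expr0n /= addr0 sqrtr0.
  move=> /cvgrPdist_lt /(_ (e / (B + 1))) [].
    by rewrite divr_gt0 // ltr_wpDl.
  move=> r r0 hr; exists r => // w /hr; rewrite sub0r normrN sub0r normrN.
  rewrite (ger0_norm (eucl_ge0 _)) => h.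
  apply: le_lt_trans (Gf_bound f B w hB B0) _.
  rewrite (@le_lt_trans _ _ (B * (e / (B + 1)))) //.
    by rewrite ler_wpM2l // ltW.
  rewrite mulrA ltr_pdivrMr; last by rewrite ltr_wpDl.
  nra.
have e0 : eucl v != 0.
  by apply/eqP => /eucl_eq0 h; rewrite h eqxx in v0.
rewrite /Gf; apply: cvgM; last exact: eucl_cont.
have nc := nrm_cont v v0.
have /subspace_continuousP fc' := fc.
have hc : unit_circle (nrm v) by rewrite /unit_circle /= eucl_nrm.
apply: cvg_trans (fc' _ hc).
move=> S /= hS; have h2 := nc _ hS.
have h1 : \forall w \near v, w != (0, 0).
  have := eucl_cont v; move=> /cvgrPdist_lt /(_ (eucl v)).
  rewrite lt_def e0 eucl_ge0 => /(_ isT) h.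
  near=> w; apply/eqP => w0.
  have : `|eucl v - eucl w| < eucl v by near: w.
  by rewrite w0 {2}/eucl /= expr0n /= addr0 sqrtr0 subr0 ger0_norm ?eucl_ge0 ?ltxx.
apply: filterS2 h1 h2 => w w0; apply.
by rewrite /unit_circle /= eucl_nrm.
Unshelve. all: by end_near.
Qed.
Lemma f_bounded (f : R * R -> R) : {within @unit_circle R, continuous f} ->
  exists B, 0 <= B /\ forall p, unit_circle p -> `|f p| <= B.
Proof.
move=> fc.
have cl : closed (@unit_circle R).
  exact: ((continuous_closedP (@eucl R)).1 eucl_cont _ (@closed_eq R 1)).
have sub : @unit_circle R `<=` `[-1, 1] `*` `[-1, 1].
  move=> p hp; split => /=; rewrite in_itv /= -ler_norml -hp.
    exact: abs1_le_eucl.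
  exact: abs2_le_eucl.
have ck : compact (@unit_circle R).
  apply: (subclosed_compact cl _ sub).
  exact: compact_setX (@segment_compact R (-1) 1) (@segment_compact R (-1) 1).
have := compact_bounded (continuous_compact fc ck).
move=> /(pinfty_ex_gt0) [M M0 hM]; exists M; split; first exact: ltW.
by move=> p hp; apply: (hM (f p)); exists p.
Qed.
Lemma mono_le (th : nat -> R) k : (forall i, (i < k)%N -> th i < th i.+1) ->
  forall i j, (i <= j <= k)%N -> th i <= th j.
Proof.
move=> hinc i j; elim: j => [|j IH].
  by rewrite leqn0 => /andP[/eqP -> _].
move=> /andP[ij jk]; move: ij; rewrite leq_eqVlt => /orP[/eqP -> //|ij].
apply: le_trans (IH _) (ltW (hinc _ jk)).
by rewrite -ltnS ij /= ltnW.
Qed.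

Lemma cover (a : nat -> R) m : (forall j, (j < m)%N -> a j < a j.+1) ->
  forall t, a 0%N <= t <= a m ->
  (exists j, (j <= m)%N /\ t = a j) \/ (exists j, (j < m)%N /\ a j < t < a j.+1).
Proof.
elim: m => [|m IH] ha t /andP[t0 tm].
  by left; exists 0%N; split => //; apply/eqP; rewrite eq_le tm t0.
have ha' : forall j, (j < m)%N -> a j < a j.+1.
  by move=> j jm; apply: ha; rewrite ltnS ltnW.
case: (leP t (a m)) => tam.
  have := IH ha' t; rewrite t0 tam => /(_ isT) [[j [jm ->]]|[j [jm h]]].
    by left; exists j; split => //; rewrite leqW.
  by right; exists j; split => //; rewrite ltnS ltnW.
case: (eqVneq t (a m.+1)) => [->|tne]; first by left; exists m.+1.
by right; exists m; split => //; rewrite tam /= lt_neqAle tne tm.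
Qed.

Lemma mod2pi_id (t : R) : 0 <= t < 2 * pi -> mod2pi t = t.
Proof.
move=> /andP[t0 t2].
have p0 : 0 < 2 * pi :> R by rewrite mulr_gt0 // pi_gt0.
rewrite /mod2pi (@floor_def _ _ 0) ?mulr0 ?subr0 //.
have hd : 0 <= t / (2 * pi) by rewrite divr_ge0 // ltW.
by rewrite add0r /= mulr0z mulr1z hd /= ltr_pdivrMr // mul1r.
Qed.

Lemma interp1_on (g : R -> R) k (th : nat -> R) i t :
  (forall i, (i < k)%N -> th i < th i.+1) -> (i < k)%N -> th i <= t < th i.+1 ->
  interp1 g k th t = g (th i) + (t - th i) / (th i.+1 - th i) * (g (th i.+1) - g (th i)).
Proof.
move=> hinc ik ht; rewrite /interp1 (bigD1 (Ordinal ik)) //= ht big1 ?addr0 //.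
move=> [j jk] /= ne; case: ifP => // /andP[h1 h2]; exfalso.
case: (ltngtP j i) => [ji|ij|ji].
- have : th j.+1 <= th i by apply: (mono_le _ _ hinc); rewrite ji ltnW.
  move: ht => /andP[+ _] => h3 h4.
  by have := lt_le_trans h2 (le_trans h4 h3); rewrite ltxx.
- have : th i.+1 <= th j by apply: (mono_le _ _ hinc); rewrite ij ltnW.
  move: ht => /andP[_ +] => h3 h4.
  by have := lt_le_trans h3 (le_trans h4 h1); rewrite ltxx.
- by move: ne; apply/negP; rewrite negbK; apply/eqP; apply: val_inj; rewrite /= ji.
Qed.

Lemma affine_derive (a b d e t : R) :
  is_derive t 1 (fun s : R => a + (s - b) / d * e) (e / d).
Proof.
apply: is_derive_eq.
rewrite !scaler0 !add0r mul1r subr0 ![_ *: _]/GRing.scale /=.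
by rewrite mulr1 mulrC.
Qed.

Definition chord (c : R -> R * R) (th : nat -> R) i : R * R :=
  (((c (th i.+1)).1 - (c (th i)).1) / (th i.+1 - th i),
   ((c (th i.+1)).2 - (c (th i)).2) / (th i.+1 - th i)).

Lemma near_poly (c : R -> R * R) k (th : nat -> R) i t :
  th 0%N = 0 -> th k = 2 * pi -> (forall i, (i < k)%N -> th i < th i.+1) ->
  (i < k)%N -> th i < t < th i.+1 ->
  \forall s \near t, polygon c k th s =
    ((c (th i)).1 + (s - th i) / (th i.+1 - th i) * ((c (th i.+1)).1 - (c (th i)).1),
     (c (th i)).2 + (s - th i) / (th i.+1 - th i) * ((c (th i.+1)).2 - (c (th i)).2)).
Proof.
move=> h0 hk hinc ik ht.
have hi0 : 0 <= th i by rewrite -h0; apply: (mono_le _ _ hinc); rewrite leq0n (ltnW ik).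
have hi1 : th i.+1 <= 2 * pi by rewrite -hk; apply: (mono_le _ _ hinc); rewrite ik leqnn.
have : t \in `]th i, th i.+1[ by rewrite in_itv /=.
move=> /near_in_itvoo h; near=> s.
have : s \in `]th i, th i.+1[ by near: s.
rewrite in_itv /= => /andP[s1 s2].
have sm : mod2pi s = s.
  by apply: mod2pi_id; rewrite (le_trans hi0 (ltW s1)) (lt_le_trans s2 hi1).
rewrite /polygon sm.
by rewrite !(@interp1_on _ k th i s hinc ik) // (ltW s1) s2.
Unshelve. all: by end_near.
Qed.

Lemma dpoly (c : R -> R * R) k (th : nat -> R) i t :
  th 0%N = 0 -> th k = 2 * pi -> (forall i, (i < k)%N -> th i < th i.+1) ->
  (i < k)%N -> th i < t < th i.+1 ->
  dcurve (polygon c k th) t = chord c th i.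
Proof.
move=> h0 hk hinc ik ht.
have hn := near_poly c k th i t h0 hk hinc ik ht.
rewrite /dcurve /chord !derive1E; congr (_, _).
- rewrite (near_eq_derive _ (g := fun s => (c (th i)).1 + (s - th i) / (th i.+1 - th i) * ((c (th i.+1)).1 - (c (th i)).1))).
    by case: (affine_derive (c (th i)).1 (th i) (th i.+1 - th i) ((c (th i.+1)).1 - (c (th i)).1) t) => _ ->.
  by apply: filterS hn => s ->.
- rewrite (near_eq_derive _ (g := fun s => (c (th i)).2 + (s - th i) / (th i.+1 - th i) * ((c (th i.+1)).2 - (c (th i)).2))).
    by case: (affine_derive (c (th i)).2 (th i) (th i.+1 - th i) ((c (th i.+1)).2 - (c (th i)).2) t) => _ ->.
  by apply: filterS hn => s ->.
Qed.
Lemma chord_bound (c : R -> R * R) (L : R) (th : nat -> R) i :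
  (forall s t, pdist (c s) (c t) <= L * `|s - t|) -> th i < th i.+1 ->
  eucl (chord c th i) <= L.
Proof.
move=> hL hi; have d0 : 0 < th i.+1 - th i by rewrite subr_gt0.
have := eucl_scale ((c (th i.+1)).1 - (c (th i)).1, (c (th i.+1)).2 - (c (th i)).2) _ d0.
rewrite /= => ->; rewrite ler_pdivrMr //.
by have := hL (th i.+1) (th i); rewrite /pdist gtr0_norm.
Qed.

Lemma chord_close (g : R -> R) (lo hi t : R) : lo < t < hi ->
  (forall s, lo < s < hi -> derivable g s 1 /\ derivable (derive1 g) s 1) ->
  forall e, 0 < e -> exists2 d, 0 < d & forall u z, u < t < z -> z - u < d ->
    `|(g z - g u) / (z - u) - derive1 g t| < e.
Proof.
move=> /andP[lt th] hd e e0.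
have ct : derive1 g @ t --> derive1 g t.
  apply: differentiable_continuous; apply/derivable1_diffP.
  by have [] := hd t; [rewrite lt th|].
move: ct => /cvgrPdist_lt /(_ e e0) /nbhs_ballP [r r0 hr].
exists (Num.min r (Num.min (t - lo) (hi - t))).
  by rewrite !lt_min r0 !subr_gt0 lt th.
move=> u z /andP[ut tw]; rewrite !lt_min => /and3P[zr zl zh].
have uz : u < z by apply: lt_trans ut tw.
have ulo : lo < u by move: zl; rewrite ltrBlDr; lra.
have zhi : z < hi by move: zh; rewrite ltrBlDr; lra.
have hdx : forall x, u <= x <= z -> derivable g x 1.
  move=> x /andP[ux xz]; apply: (proj1 (hd x _)); apply/andP; split; lra.
have hder : forall x, x \in `]u, z[ -> is_derive x 1 g ('D_1 g x).
  move=> x; rewrite in_itv /= => /andP[ux xz]; apply: derivableP; apply: hdx.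
  apply/andP; split; lra.
have hcont : {within `[u, z], continuous g}.
  apply: derivable_within_continuous => x; rewrite in_itv /=; exact: hdx.
have [x xin hx] := MVT uz hder hcont.
rewrite hx mulfK; last by rewrite subr_eq0 gt_eqF.
rewrite -derive1E distrC.
move: xin; rewrite in_itv /= => /andP[ux xz].
apply: (hr x); rewrite /ball /= -normrN opprB.
by rewrite ltr_norml; apply/andP; split; lra.
Qed.
Lemma meas_countable (C : set R) (h : R -> R) : countable C -> measurable_fun C h.
Proof.
move=> cC mC Y mY; apply: countable_measurable.
  by move=> x; exact: measurable_set1.
by apply: sub_countable cC; apply: subset_card_le; exact: subIsetl.
Qed.

Lemma meas_key (D U : set R) (h : R -> R) : measurable D -> open U ->
  countable (D `\` U) -> {in U, continuous h} -> measurable_fun D h.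
Proof.
move=> mD oU cDU ch.
have mU : measurable U by exact: open_measurable.
have mC : measurable (D `\` U).
  by apply: countable_measurable => // x; exact: measurable_set1.
apply: (@measurable_funS _ _ _ _ ((D `&` U) `|` (D `\` U))).
- by apply: measurableU => //; exact: measurableI.
- by move=> x Dx; case: (pselect (U x)) => Ux; [left|right].
apply/measurable_funU => //; first exact: measurableI.
split; last exact: (meas_countable _ h cDU).
apply: (measurable_funS mU (@subIsetr _ D U)).
exact: open_continuous_measurable_fun.
Qed.
Lemma mesh_ge k (th : nat -> R) i : (i < k)%N -> th i.+1 - th i <= mesh k th.
Proof. by move=> ik; rewrite /mesh (bigD1 (Ordinal ik)) //= le_max lexx. Qed.

Lemma cover_open (a : nat -> R) m x : a 0%N = 0 -> a m = 2 * pi ->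
  (forall j, (j < m)%N -> a j < a j.+1) -> 0 <= x <= 2 * pi -> ~ range a x ->
  exists i, (i < m)%N /\ a i < x < a i.+1.
Proof.
move=> a0 am ha hx nr.
have := cover a m ha x; rewrite a0 am => /(_ hx) [[j [_ xj]]|//].
by exfalso; apply: nr; exists j.
Qed.

Lemma range_countable (a : nat -> R) : countable (range a).
Proof. by apply: sub_countable (card_image_le a setT) _; exact: countableP. Qed.

Lemma ae_countable (Z : set R) (P : R -> Prop) : countable Z ->
  (forall x, ~ Z x -> P x) -> {ae (@lebesgue_measure R), forall x, P x}.
Proof.
move=> cZ hP; exists Z; split.
- by apply: countable_measurable => // x; exact: measurable_set1.
- exact: countable_lebesgue_measure0.
- by move=> x /= nPx; apply: contrapT => /hP.
Qed.
Lemma main_aux (c : R -> R * R)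
  (hC : in_C c) (hpw : piecewise_C2_bounded c)
  (k : nat -> nat) (th : nat -> nat -> R)
  (hth0 : forall n, th n 0%N = 0)
  (hthk : forall n, th n (k n) = 2 * pi)
  (hinc : forall n i, (i < k n)%N -> th n i < th n i.+1)
  (hmesh : (fun n => mesh (k n) (th n)) @ \oo --> 0) :
  length_weak_cvg (fun n => polygon c (k n) (th n)) c.
Proof.
move=> f fc.
have [B [B0 hB]] := f_bounded f fc.
have Gc := Gf_cont f B fc hB B0.
case: hC => _ [[L hL] _].
case: hpw => m [a [M [a0 [am [ainc hpc]]]]].
have L0 : 0 <= L.
  by have := hL 1 0; rewrite subr0 normr1 mulr1; apply: le_trans; exact: eucl_ge0.
pose D : set R := `[0, 2 * pi]%classic.
have mD : measurable D by exact: measurable_itv.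
have hD : forall x, D x -> 0 <= x <= 2 * pi.
  by move=> x; rewrite /D /= in_itv.
pose Zs := fun n : nat => if n is n'.+1 then range (th n') else range a.
pose Z := \bigcup_(n in setT) Zs n.
have cZ : countable Z.
  apply: bigcup_countable => // -[|n] _ /=; exact: range_countable.
have hpoly : forall n x, D x -> ~ Z x -> exists i, (i < k n)%N /\ th n i < x < th n i.+1.
  move=> n x Dx nZ; apply: (cover_open (th n) (k n) x (hth0 n) (hthk n) (hinc n) (hD x Dx)).
  by move=> h; apply: nZ; exists n.+1.
pose fn := fun n t => (Gf f (dcurve (polygon c (k n) (th n)) t))%:E.
pose fl := fun t => (Gf f (dcurve c t))%:E.
have mfn : forall n, measurable_fun D (fn n).
  move=> n; apply/measurable_EFinP.
  apply: (meas_key D (\bigcup_(i in [set i | (i < k n)%N]) `]th n i, th n i.+1[%classic)) => //.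
  - by apply: bigcup_open => i _; exact: interval_open.
  - apply: sub_countable (range_countable (th n)).
    apply: subset_card_le => x [Dx nU].
    have := cover (th n) (k n) (hinc n) x; rewrite hth0 hthk => /(_ (hD x Dx)).
    case=> [[j [_ ->]]|[i [ik hi]]]; first by exists j.
    by exfalso; apply: nU; exists i => //=; rewrite in_itv /=.
  - move=> x; rewrite inE => -[i /= ik]; rewrite in_itv /= => hx.
    have hn : \forall t \near x, t \in `]th n i, th n i.+1[.
      by apply: near_in_itvoo; rewrite in_itv /=.
    apply/cvgrPdist_lt => e e0; near=> t.
    have : t \in `]th n i, th n i.+1[ by near: t.
    rewrite in_itv /= => ht.
    rewrite /= (dpoly c (k n) (th n) i x (hth0 n) (hthk n) (hinc n) ik hx).
    by rewrite (dpoly c (k n) (th n) i t (hth0 n) (hthk n) (hinc n) ik ht) subrr normr0.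
have mfl : measurable_fun D fl.
  apply/measurable_EFinP.
  apply: (meas_key D (\bigcup_(j in [set j | (j < m)%N]) `]a j, a j.+1[%classic)) => //.
  - by apply: bigcup_open => i _; exact: interval_open.
  - apply: sub_countable (range_countable a).
    apply: subset_card_le => x [Dx nU].
    have := cover a m ainc x; rewrite a0 am => /(_ (hD x Dx)).
    case=> [[j [_ ->]]|[i [ik hi]]]; first by exists j.
    by exfalso; apply: nU; exists i => //=; rewrite in_itv /=.
  - move=> x; rewrite inE => -[j /= jm]; rewrite in_itv /= => hx.
    have [[d1 d2] [[e1 e2] _]] := hpc j jm x hx.
    apply: (continuous_comp _ (Gc _)).
    apply: (@cvg_pair _ _ _ _ (nbhs (dcurve c x).1) (nbhs (dcurve c x).2)).
      exact: (differentiable_continuous ((derivable1_diffP _ _).1 e1)).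
    exact: (differentiable_continuous ((derivable1_diffP _ _).1 e2)).
have hff : {ae (@lebesgue_measure R), forall x, D x -> fn ^~ x @ \oo --> fl x}.
  apply: (ae_countable Z _ cZ) => x nZ Dx.
  have [j [jm hj]] : exists j, (j < m)%N /\ a j < x < a j.+1.
    apply: (cover_open a m x a0 am ainc (hD x Dx)).
    by move=> h; apply: nZ; exists 0%N.
  have cv1 : forall (g : R -> R) (pr : R * R -> R),
      (forall s, a j < s < a j.+1 -> derivable g s 1 /\ derivable (derive1 g) s 1) ->
      (forall n i, (i < k n)%N -> th n i < x < th n i.+1 ->
         pr (dcurve (polygon c (k n) (th n)) x) = (g (th n i.+1) - g (th n i)) / (th n i.+1 - th n i)) ->
      (fun n => pr (dcurve (polygon c (k n) (th n)) x)) @ \oo --> derive1 g x.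
    move=> g pr hg hpr; apply/cvgrPdist_lt => e e0.
    have [d d0 hd] := chord_close g (a j) (a j.+1) x hj hg e e0.
    move: hmesh => /cvgrPdist_lt /(_ d d0); apply: filterS => n hn.
    have [i [ik hi]] := hpoly n x Dx nZ.
    rewrite (hpr n i ik hi) distrC; apply: hd => //.
    apply: le_lt_trans (mesh_ge (k n) (th n) i ik) _.
    by apply: le_lt_trans (ler_norm _) _; rewrite -normrN -(sub0r (mesh _ _)).
  have hseq : (fun n => dcurve (polygon c (k n) (th n)) x) @ \oo --> dcurve c x.
    apply: (@cvg_pair _ _ _ _ (nbhs (dcurve c x).1) (nbhs (dcurve c x).2)).
    - apply: (cv1 (fun s => (c s).1) fst).
        by move=> s hs; have [[? _] [[? _] _]] := hpc j jm s hs.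
      move=> n i ik hi.
      by rewrite (dpoly c (k n) (th n) i x (hth0 n) (hthk n) (hinc n) ik hi).
    - apply: (cv1 (fun s => (c s).2) snd).
        by move=> s hs; have [[_ ?] [[_ ?] _]] := hpc j jm s hs.
      move=> n i ik hi.
      by rewrite (dpoly c (k n) (th n) i x (hth0 n) (hthk n) (hinc n) ik hi).
  apply: cvg_EFin; first by near=> n.
  exact: (cvg_comp _ _ hseq (Gc _)).
pose g := fun t : R => (B * L)%:E.
have ig : (@lebesgue_measure R).-integrable D g.
  apply/integrableP; split; first exact: measurable_cst.
  rewrite (_ : (fun x => `|g x|)%E = cst (`|B * L|%:E)); last first.
    by apply/funext => x.
  have hm : (lebesgue_measure D = (2 * pi)%:E)%E.
    rewrite /D (@lebesgue_measure_itv R `[0, 2 * pi]) /= lte_fin mulr_gt0 ?pi_gt0 //.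
    by rewrite sube0.
  rewrite integral_cst //.
  change (`|B * L|%:E * lebesgue_measure D < +oo)%E.
  rewrite hm.
  by rewrite -EFinM ltry.
have hfg : {ae (@lebesgue_measure R), forall x n, D x -> (`|fn n x| <= g x)%E}.
  apply: (ae_countable Z _ cZ) => x nZ n Dx.
  have [i [ik hi]] := hpoly n x Dx nZ.
  rewrite /fn /g (dpoly c (k n) (th n) i x (hth0 n) (hthk n) (hinc n) ik hi) /=.
  rewrite lee_fin; apply: le_trans (Gf_bound f B _ hB B0) _.
  by apply: ler_wpM2l => //; exact: (chord_bound c L (th n) i hL (hinc n i ik)).
have [_ _ H] := @dominated_convergence _ (measurableTypeR R) R (@lebesgue_measure R) D mD fn fl g mfn mfl hff ig hfg.
exact: H.
Unshelve. all: by end_near.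
Qed.
End S1.

Theorem proposition2p12 (R : realType) (c : R -> R * R)
  (hC : in_C c) (hpw : piecewise_C2_bounded c)
  (k : nat -> nat) (th : nat -> nat -> R)
  (hth0 : forall n, th n 0%N = 0)
  (hthk : forall n, th n (k n) = 2 * pi)
  (hinc : forall n i, (i < k n)%N -> th n i < th n i.+1)
  (hmesh : (fun n => mesh (k n) (th n)) @ \oo --> 0) :
  length_weak_cvg (fun n => polygon c (k n) (th n)) c.
Proof.
exact: (main_aux R c hC hpw k th hth0 hthk hinc hmesh).
Qed.
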